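(* Let $a\ge b\ge1$ be integers with either $b\ge2$, or $b=1$ and $a\ge5$, and $A=\begin{pmatrix}2&-a\\-b&2\end{pmatrix}$. Then every $\pi$-system $\Sigma\subseteq\Delta_{\mathrm{re}}$ of $\mathfrak g(A)$ with $|\Sigma|>1$ is either of the form $\{\beta_1^j,\beta_2^k\}$ or $\{-\beta_1^j,-\beta_2^k\}$ where $\{\beta_1^j,\beta_2^k\}$ is a $\pi$-system (for $b=1$, $a\ge5$ this means $(j,k)\ne(1,0)$), or of the form $\Sigma=\{\beta_i^j,-\beta_i^k\}$ for some $j,k\in\mathbb Z_+$ and $i\in\{1,2\}$. In particular $|\Sigma|\le2$, and $\Sigma$ is linearly independent unless $\Sigma=\{\alpha,-\alpha\}$ for some $\alpha\in\Delta^+_{\mathrm{re}}$. Conversely, if $b\ge2$, then $\{\beta_i^j,-\beta_i^k\}$ is a $\pi$-system for all $j,k\in\mathbb Z_+$ and $i=1,2$; if $b=1$ and $a\ge5$, then $\{\beta_i^j,-\beta_i^k\}$ is a $\pi$-system if and only if $\{j,k\}\ne\{s,s+2\}$ for every $s\in\mathbb Z_+$ with $s\equiv i\pmod 2$.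
   Context: Let $\mathfrak g(A)$ be the Kac–Moody algebra with simple roots $\alpha_1,\alpha_2$, root system $\Delta$, real roots $\Delta_{\mathrm{re}}$, positive real roots $\Delta^+_{\mathrm{re}}$. $\mathbb Z_+=\{0,1,2,\dots\}$. Define $c_0=d_0=0$, $c_1=d_1=1$, $c_{k+2}+c_k=a d_{k+1}$, $d_{k+2}+d_k=b c_{k+1}$, and $\beta_1^j=c_j\alpha_1+d_{j+1}\alpha_2$, $\beta_2^j=c_{j+1}\alpha_1+d_j\alpha_2$ ($j\in\mathbb Z_+$); then $\Delta^+_{\mathrm{re}}=\{\beta_1^j,\beta_2^j\}$. A subset $\Sigma\subseteq\Delta_{\mathrm{re}}$ is a $\pi$-system if $\alpha-\beta\notin\Delta$ for all $\alpha,\beta\in\Sigma$. *)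

(* Defs.v *)
(* Roots of the rank-2 Kac-Moody algebra g(A),
   A = [[2,-a],[-b,2]], are encoded by their coordinates (x,y) meaning
   x*alpha_1 + y*alpha_2 in the root lattice Z^2. *)
From Stdlib Require Import ZArith List Arith.
Open Scope Z_scope.

Definition vec := (Z * Z)%type.

Definition vneg (v : vec) : vec := (- fst v, - snd v).
Definition vsub (u v : vec) : vec := (fst u - fst v, snd u - snd v).

(* simple reflections r_i(v) = v - <v, alpha_i^vee> alpha_i,
   with <alpha_j, alpha_i^vee> = A_{ij}; [true] = r_1, [false] = r_2 *)
Definition refl (a b : Z) (i : bool) (v : vec) : vec :=
  if i then (a * snd v - fst v, snd v) else (fst v, b * fst v - snd v).

Definition wact (a b : Z) (w : list bool) (v : vec) : vec :=
  fold_right (refl a b) v w.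

Definition W_orbit (a b : Z) (S : vec -> Prop) (v : vec) : Prop :=
  exists (w : list bool) (x : vec), S x /\ v = wact a b w x.

Definition simple_root (v : vec) : Prop := v = (1, 0) \/ v = (0, 1).

(* Kac's fundamental set K: alpha in Q_+ \ {0} with connected support and
   <alpha, alpha_i^vee> <= 0 for i = 1,2 (support connectivity is automatic in
   rank 2 since the Dynkin diagram is connected for a,b >= 1). *)
Definition Kset (a b : Z) (v : vec) : Prop :=
  0 <= fst v /\ 0 <= snd v /\ v <> (0, 0) /\
  2 * fst v - a * snd v <= 0 /\ - b * fst v + 2 * snd v <= 0.

(* Delta_re = W . Pi ;  Delta_im^+ = W . K  (Kac, Thm 5.4) *)
Definition real_root (a b : Z) (v : vec) : Prop := W_orbit a b simple_root v.
Definition pos_imag_root (a b : Z) (v : vec) : Prop := W_orbit a b (Kset a b) v.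
Definition imag_root (a b : Z) (v : vec) : Prop :=
  pos_imag_root a b v \/ pos_imag_root a b (vneg v).
Definition root (a b : Z) (v : vec) : Prop := real_root a b v \/ imag_root a b v.

Definition pos_real_root (a b : Z) (v : vec) : Prop :=
  real_root a b v /\ 0 <= fst v /\ 0 <= snd v.

Definition pi_system (a b : Z) (S : vec -> Prop) : Prop :=
  (forall v, S v -> real_root a b v) /\
  (forall u v, S u -> S v -> ~ root a b (vsub u v)).

(* the sequences c_k, d_k: cd n = (c_n, d_n, c_{n+1}, d_{n+1}) *)
Fixpoint cd (a b : Z) (n : nat) : Z * Z * Z * Z :=
  match n with
  | O => (0, 0, 1, 1)
  | S m => let '(c, d, c', d') := cd a b m in (c', d', a * d' - c, b * c' - d)
  end.

Definition cseq (a b : Z) (n : nat) : Z := let '(c, _, _, _) := cd a b n in c.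
Definition dseq (a b : Z) (n : nat) : Z := let '(_, d, _, _) := cd a b n in d.

Definition beta1 (a b : Z) (j : nat) : vec := (cseq a b j, dseq a b (S j)).
Definition beta2 (a b : Z) (j : nat) : vec := (cseq a b (S j), dseq a b j).
Definition beta (a b : Z) (i j : nat) : vec :=
  if Nat.eqb i 1 then beta1 a b j else beta2 a b j.

Definition pair_set (u v : vec) : vec -> Prop := fun x => x = u \/ x = v.
Definition set_eq (S T : vec -> Prop) : Prop := forall x, S x <-> T x.

(* Main.v *)
Require Import Defs.
From Stdlib Require Import ZArith List Arith Lia Bool.
Import ListNotations.
Open Scope Z_scope.


Section Roots.
Context (a b : Z) (Hb : 1 <= b) (Hba : b <= a).

Definition qf (v : vec) : Z :=
  b * fst v * fst v - a * b * fst v * snd v + a * snd v * snd v.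

Lemma refl_invol i v : refl a b i (refl a b i v) = v.
Proof. destruct i, v; simpl; f_equal; ring. Qed.

Lemma refl_neg i v : refl a b i (vneg v) = vneg (refl a b i v).
Proof. destruct i, v; unfold vneg; simpl; f_equal; ring. Qed.

Lemma refl_sub i u v : refl a b i (vsub u v) = vsub (refl a b i u) (refl a b i v).
Proof. destruct i, u, v; unfold vsub; simpl; f_equal; ring. Qed.

Lemma q_refl i v : qf (refl a b i v) = qf v.
Proof. destruct i, v; unfold qf; simpl; ring. Qed.

Lemma q_neg v : qf (vneg v) = qf v.
Proof. destruct v; unfold qf, vneg; simpl; ring. Qed.

Lemma wact_neg w v : wact a b w (vneg v) = vneg (wact a b w v).
Proof. induction w; simpl; auto. rewrite IHw, refl_neg; auto. Qed.

Lemma wact_app w1 w2 v : wact a b (w1 ++ w2) v = wact a b w1 (wact a b w2 v).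
Proof. unfold wact. apply fold_right_app. Qed.

Lemma real_refl i v : real_root a b v -> real_root a b (refl a b i v).
Proof. intros (w & x & Hx & ->). exists (i :: w), x; split; auto. Qed.

Lemma real_neg v : real_root a b v -> real_root a b (vneg v).
Proof.
  intros (w & x & Hx & ->). rewrite <- wact_neg.
  destruct Hx as [-> | ->].
  - exists (w ++ [true]), (1,0); split; [left; auto|].
    rewrite wact_app; simpl; unfold vneg; simpl; f_equal; f_equal; ring.
  - exists (w ++ [false]), (0,1); split; [right; auto|].
    rewrite wact_app; simpl; unfold vneg; simpl; f_equal; f_equal; ring.
Qed.

Lemma vneg_invol v : vneg (vneg v) = v.
Proof. destruct v; unfold vneg; simpl; f_equal; ring. Qed.

Lemma pimag_refl i v : pos_imag_root a b v -> pos_imag_root a b (refl a b i v).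
Proof. intros (w & x & Hx & ->). exists (i :: w), x; split; auto. Qed.

Lemma root_refl i v : root a b v -> root a b (refl a b i v).
Proof.
  intros [H | [H | H]].
  - left; apply real_refl; auto.
  - right; left; apply pimag_refl; auto.
  - right; right. rewrite <- refl_neg. apply pimag_refl; auto.
Qed.

Lemma root_refl_iff i v : root a b (refl a b i v) <-> root a b v.
Proof.
  split; intro H; [rewrite <- (refl_invol i v)|]; apply root_refl; auto.
Qed.

Lemma root_neg v : root a b v -> root a b (vneg v).
Proof.
  intros [H | [H | H]].
  - left; apply real_neg; auto.
  - right; right. rewrite vneg_invol; auto.
  - right; left; auto.
Qed.

Lemma root_neg_iff v : root a b (vneg v) <-> root a b v.
Proof.
  split; intro H; [rewrite <- (vneg_invol v)|]; apply root_neg; auto.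
Qed.

Lemma refl_zero i : refl a b i (0,0) = (0,0).
Proof. destruct i; simpl; f_equal; ring. Qed.

Lemma wact_nz w v : v <> (0,0) -> wact a b w v <> (0,0).
Proof.
  induction w; simpl; auto. intros Hv E. apply (IHw Hv).
  rewrite <- (refl_invol a0 (wact a b w v)), E. apply refl_zero.
Qed.

Lemma q_wact w v : qf (wact a b w v) = qf v.
Proof. induction w; simpl; auto. rewrite q_refl; auto. Qed.

Lemma K_q v : Kset a b v -> qf v <= 0.
Proof.
  destruct v as [x y]; unfold Kset, qf; cbn [fst snd] in *. intros (Hx & Hy & _ & H1 & H2).
  assert (0 <= b * x) by nia. assert (0 <= a * y) by nia.
  assert (- b * x = - (b * x)) by ring.
  assert (b * x * (2 * x - a * y) <= 0) by (apply Z.mul_nonneg_nonpos; lia).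
  assert (a * y * (2 * y - b * x) <= 0) by (apply Z.mul_nonneg_nonpos; lia).
  nia.
Qed.

Lemma pimag_char v : pos_imag_root a b v -> v <> (0,0) /\ qf v <= 0.
Proof.
  intros (w & x & Hx & ->). split.
  - apply wact_nz. destruct Hx as (_ & _ & H & _); auto.
  - rewrite q_wact. apply K_q; auto.
Qed.

Lemma q_sign x y : qf (x, y) <= 0 -> (x, y) <> (0,0) ->
  (0 < x /\ 0 < y) \/ (x < 0 /\ y < 0).
Proof.
  unfold qf; cbn [fst snd]. intros H Hnz.
  assert (0 < a) by lia.
  destruct (Z.lt_trichotomy x 0) as [hx|[hx|hx]];
  destruct (Z.lt_trichotomy y 0) as [hy|[hy|hy]]; subst; auto.
  all: exfalso; try (apply Hnz; reflexivity).
  all: try (assert (0 < x * x) by nia; nia).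
  all: try (assert (0 < y * y) by nia; nia).
  all: assert (0 < x * x) by nia; assert (0 < y * y) by nia;
       assert (x * y < 0) by nia; assert (0 < a * b) by nia; nia.
Qed.

Lemma pos_q_imag_aux (n : nat) : forall x y, 0 < x -> 0 < y ->
  (Z.to_nat (x + y) <= n)%nat -> qf (x, y) <= 0 -> pos_imag_root a b (x, y).
Proof.
  induction n as [|n IH]; intros x y Hx Hy Hn Hq.
  - lia.
  - destruct (Z_le_gt_dec (2 * x - a * y) 0) as [H1|H1].
    + destruct (Z_le_gt_dec (- b * x + 2 * y) 0) as [H2|H2].
      * exists nil, (x, y); split; [|reflexivity].
        unfold Kset; cbn [fst snd]; repeat split; try lia. intro E; inversion E; lia.
      *
        assert (Hq' : qf (x, b * x - y) <= 0).
        { rewrite <- (q_refl false (x, y)) in Hq. cbn [refl fst snd] in Hq. exact Hq. }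
        assert (Hnz : (x, b * x - y) <> (0,0)) by (intro E; inversion E; lia).
        assert (- b * x = - (b * x)) by ring.
        destruct (q_sign _ _ Hq' Hnz) as [[_ Hy']|[Hx' _]]; [|lia].
        destruct (IH x (b * x - y) Hx Hy' ltac:(lia) Hq') as (w & k & Hk & E).
        exists (false :: w), k; split; auto. simpl. rewrite <- E. simpl. f_equal; ring.
    + assert (Hq' : qf (a * y - x, y) <= 0).
      { rewrite <- (q_refl true (x, y)) in Hq. cbn [refl fst snd] in Hq. exact Hq. }
      assert (Hnz : (a * y - x, y) <> (0,0)) by (intro E; inversion E; lia).
      destruct (q_sign _ _ Hq' Hnz) as [[Hx' _]|[_ Hy']]; [|lia].
      destruct (IH (a * y - x) y Hx' Hy ltac:(lia) Hq') as (w & k & Hk & E).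
      exists (true :: w), k; split; auto. simpl. rewrite <- E. simpl. f_equal; ring.
Qed.

Lemma q_imag v : v <> (0,0) -> qf v <= 0 -> root a b v.
Proof.
  destruct v as [x y]; intros Hnz Hq. right.
  destruct (q_sign x y Hq Hnz) as [[hx hy]|[hx hy]].
  - left. apply (pos_q_imag_aux (Z.to_nat (x + y))); auto.
  - right. unfold vneg; simpl. apply (pos_q_imag_aux (Z.to_nat (-x + -y))); try lia.
    rewrite <- Hq; unfold qf; simpl; ring_simplify; lia.
Qed.

End Roots.


Section Main.
Context (a b : Z) (Hb : 1 <= b) (Hba : b <= a) (H4 : 4 <= a * b) (H5 : b = 1 -> 5 <= a).

Local Notation c := (cseq a b).
Local Notation d := (dseq a b).


Lemma crec n : c (S (S n)) = a * d (S n) - c n.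
Proof. unfold cseq, dseq; simpl. destruct (cd a b n) as [[[x y] z] w]; reflexivity. Qed.
Lemma drec n : d (S (S n)) = b * c (S n) - d n.
Proof. unfold cseq, dseq; simpl. destruct (cd a b n) as [[[x y] z] w]; reflexivity. Qed.

Lemma c0 : c 0 = 0. Proof. reflexivity. Qed.
Lemma d0 : d 0 = 0. Proof. reflexivity. Qed.
Lemma c1 : c 1 = 1. Proof. reflexivity. Qed.
Lemma d1 : d 1 = 1. Proof. reflexivity. Qed.
Lemma c2 : c 2 = a. Proof. rewrite crec, d1, c0; ring. Qed.
Lemma d2 : d 2 = b. Proof. rewrite drec, c1, d0; ring. Qed.
Lemma c3 : c 3 = a * b - 1. Proof. rewrite crec, d2, c1; ring. Qed.
Lemma d3 : d 3 = a * b - 1. Proof. rewrite drec, c2, d1; ring. Qed.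
Lemma c4 : c 4 = a * a * b - 2 * a. Proof. rewrite crec, d3, c2; ring. Qed.
Lemma d4 : d 4 = a * b * b - 2 * b. Proof. rewrite drec, c3, d2; ring. Qed.
Lemma c5 : c 5 = a * a * b * b - 3 * a * b + 1. Proof. rewrite crec, d4, c3; ring. Qed.
Lemma d5 : d 5 = a * a * b * b - 3 * a * b + 1. Proof. rewrite drec, c4, d3; ring. Qed.

Lemma c4rec n : c (S (S (S (S n)))) = (a * b - 2) * c (S (S n)) - c n.
Proof.
  rewrite (crec (S (S n))), (drec (S n)).
  assert (E := crec n). assert (a * d (S n) = c (S (S n)) + c n) by lia.
  nia.
Qed.
Lemma d4rec n : d (S (S (S (S n)))) = (a * b - 2) * d (S (S n)) - d n.
Proof.
  rewrite (drec (S (S n))), (crec (S n)).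
  assert (E := drec n). assert (b * c (S n) = d (S (S n)) + d n) by lia.
  nia.
Qed.

Lemma cmono_aux n : (0 <= c n /\ c n <= c (S (S n))) /\
   (0 <= c (S n) /\ c (S n) <= c (S (S (S n)))).
Proof.
  induction n as [|n IH].
  - rewrite c0, c1, c2, c3. lia.
  - destruct IH as [[h1 h2] [h3 h4]]. split; [split; auto; lia|].
    split; [lia|]. rewrite c4rec.
    assert (0 <= (a * b - 4) * c (S (S n))) by (apply Z.mul_nonneg_nonneg; lia).
    nia.
Qed.
Lemma dmono_aux n : (0 <= d n /\ d n <= d (S (S n))) /\
   (0 <= d (S n) /\ d (S n) <= d (S (S (S n)))).
Proof.
  induction n as [|n IH].
  - rewrite d0, d1, d2, d3. lia.
  - destruct IH as [[h1 h2] [h3 h4]]. split; [split; auto; lia|].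
    split; [lia|]. rewrite d4rec.
    assert (0 <= (a * b - 4) * d (S (S n))) by (apply Z.mul_nonneg_nonneg; lia).
    nia.
Qed.

Lemma c_nonneg n : 0 <= c n. Proof. apply (cmono_aux n). Qed.
Lemma d_nonneg n : 0 <= d n. Proof. apply (dmono_aux n). Qed.
Lemma c_mono n : c n <= c (S (S n)). Proof. apply (cmono_aux n). Qed.
Lemma d_mono n : d n <= d (S (S n)). Proof. apply (dmono_aux n). Qed.

Lemma cD_mono n : c (S (S n)) - c n <= c (S (S (S (S n)))) - c (S (S n)).
Proof.
  rewrite c4rec. assert (0 <= (a * b - 4) * c (S (S n))) by
    (apply Z.mul_nonneg_nonneg; [lia| apply c_nonneg]). nia.
Qed.
Lemma dD_mono n : d (S (S n)) - d n <= d (S (S (S (S n)))) - d (S (S n)).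
Proof.
  rewrite d4rec. assert (0 <= (a * b - 4) * d (S (S n))) by
    (apply Z.mul_nonneg_nonneg; [lia| apply d_nonneg]). nia.
Qed.

Lemma c_pos n : 1 <= c (S n).
Proof.
  assert (forall n, 1 <= c (S n) /\ 1 <= c (S (S n))).
  { induction n0 as [|n0 IH]. - rewrite c1, c2; lia.
    - split; [apply IH|]. pose proof (c_mono (S n0)); lia. }
  apply H.
Qed.
Lemma d_pos n : 1 <= d (S n).
Proof.
  assert (forall n, 1 <= d (S n) /\ 1 <= d (S (S n))).
  { induction n0 as [|n0 IH]. - rewrite d1, d2; lia.
    - split; [apply IH|]. pose proof (d_mono (S n0)); lia. }
  apply H.
Qed.

Lemma dD_ge2 n : 2 <= d (S (S (S n))) - d (S n).
Proof.
  assert (forall n, 2 <= d (S (S (S n))) - d (S n) /\ 2 <= d (S (S (S (S n)))) - d (S (S n))).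
  { induction n0 as [|n0 IH].
    - rewrite d1, d2, d3, d4. split; [lia|].
      destruct (Z.eq_dec b 1) as [->|hb]. specialize (H5 eq_refl); lia. nia.
    - split; [apply IH|]. pose proof (dD_mono (S n0)); lia. }
  apply H.
Qed.

Lemma cD_big n : a <= b * (c (S (S (S (S n)))) - c (S (S n)) - 1).
Proof.
  assert (forall n, a <= b * (c (S (S (S (S n)))) - c (S (S n)) - 1) /\
                    a <= b * (c (S (S (S (S (S n))))) - c (S (S (S n))) - 1)).
  { induction n0 as [|n0 IH].
    - rewrite c2, c3, c4, c5. split.
      + destruct (Z.eq_dec b 1) as [->|hb]. specialize (H5 eq_refl); nia.
        assert (2 <= b) by lia. assert (1 <= a * b - 3) by lia.
        assert (a <= a * (a * b - 3)) by nia. nia.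
      + destruct (Z.eq_dec b 1) as [->|hb]. specialize (H5 eq_refl); nia.
        assert (2 <= b) by lia.
        destruct (Z.eq_dec (a * b) 4) as [e|e].
        * assert (a = 2) by nia. assert (b = 2) by nia. subst. lia.
        * assert (5 <= a * b) by lia.
          assert (a * b <= a * a * b * b - 3 * a * b + 1 - (a * b - 1) - 1) by nia.
          nia.
    - split; [apply IH|]. pose proof (cD_mono (S (S n0))).
      destruct IH as [IH _].
      match goal with |- _ <= b * ?Y => assert (b * (c (S (S (S (S n0)))) - c (S (S n0)) - 1) <= b * Y)
        by (apply Z.mul_le_mono_nonneg_l; lia) end. lia. }
  apply H.
Qed.


Definition bt (t : bool) (j : nat) : vec := if t then beta1 a b j else beta2 a b j.
Definition rb (v : vec) : Prop := exists t j, v = bt t j \/ v = vneg (bt t j).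

Lemma refl_up t j : refl a b t (bt t j) = bt (negb t) (S j).
Proof.
  destruct t; unfold bt, beta1, beta2; simpl.
  - rewrite (crec j). reflexivity.
  - rewrite (drec j). reflexivity.
Qed.

Lemma refl_down t j : refl a b (negb t) (bt t (S j)) = bt (negb t) j.
Proof.
  destruct t; unfold bt, beta1, beta2; simpl.
  - rewrite (drec j). f_equal; ring.
  - rewrite (crec j). f_equal; ring.
Qed.

Lemma refl_down' t j : refl a b t (bt (negb t) (S j)) = bt t j.
Proof. rewrite <- (negb_involutive t) at 1 3. apply refl_down. Qed.

Lemma refl_bt0 t : refl a b (negb t) (bt t 0) = vneg (bt t 0).
Proof. destruct t; unfold bt, beta1, beta2, vneg; simpl; rewrite ?c0, ?d0, ?c1, ?d1; f_equal; ring. Qed.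

Lemma rb_refl i v : rb v -> rb (refl a b i v).
Proof.
  assert (K : forall t j, rb (refl a b i (bt t j))).
  { intros t j. destruct (Bool.bool_dec i t) as [->|hne].
    - rewrite refl_up. exists (negb t), (S j); left; auto.
    - assert (i = negb t) as -> by (destruct i, t; auto; congruence).
      destruct j.
      + rewrite refl_bt0. exists t, 0%nat; right; auto.
      + rewrite refl_down. exists (negb t), j; left; auto. }
  intros (t & j & [-> | ->]).
  - apply K.
  - rewrite refl_neg. destruct (K t j) as (t' & j' & [E|E]); rewrite E.
    + exists t', j'; right; auto.
    + exists t', j'; left; rewrite vneg_invol; auto.
Qed.

Lemma bt_real t j : real_root a b (bt t j).
Proof.
  revert t; induction j as [|j IH]; intros t.
  - exists nil. destruct t; unfold bt, beta1, beta2; simpl.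
    + exists (0,1); split; [right|]; reflexivity.
    + exists (1,0); split; [left|]; reflexivity.
  - rewrite <- (negb_involutive t). rewrite <- refl_up. apply real_refl, IH.
Qed.

Lemma real_iff_rb v : real_root a b v <-> rb v.
Proof.
  split.
  - intros (w & x & Hx & ->). induction w as [|i w IH]; simpl.
    + destruct Hx as [-> | ->].
      * exists false, 0%nat; left; reflexivity.
      * exists true, 0%nat; left; reflexivity.
    + apply rb_refl; auto.
  - intros (t & j & [-> | ->]); [|apply real_neg]; apply bt_real.
Qed.

Lemma q_bt t j : qf a b (bt t j) = a \/ qf a b (bt t j) = b.
Proof.
  revert t; induction j as [|j IH]; intros t.
  - destruct t; unfold bt, beta1, beta2, qf; simpl; rewrite ?c0, ?d0, ?c1, ?d1; [left|right]; ring.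
  - rewrite <- (negb_involutive t), <- refl_up, q_refl. apply IH.
Qed.

Lemma rb_q v : rb v -> qf a b v = a \/ qf a b v = b.
Proof. intros (t & j & [-> | ->]); [|rewrite q_neg]; apply q_bt. Qed.

Lemma root_cases v : root a b v -> rb v \/ (v <> (0,0) /\ qf a b v <= 0).
Proof.
  intros [H | [H | H]].
  - left; apply real_iff_rb; auto.
  - right; apply pimag_char; auto.
  - right. destruct (pimag_char a b Hb Hba _ H) as [h1 h2]. rewrite q_neg in h2.
    split; auto. intro E; apply h1; rewrite E; reflexivity.
Qed.

Lemma root_of_rb v : rb v -> root a b v.
Proof. intro H; left; apply real_iff_rb; auto. Qed.

Lemma not_root_big v : a < qf a b v -> ~ root a b v.
Proof.
  intros Hq Hr. destruct (root_cases v Hr) as [H|[_ H]].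
  - destruct (rb_q v H); lia.
  - lia.
Qed.

Lemma bt_coords t j : 0 <= fst (bt t j) /\ 0 <= snd (bt t j) /\ 1 <= fst (bt t j) + snd (bt t j).
Proof.
  destruct t; unfold bt, beta1, beta2; simpl.
  - pose proof (c_nonneg j). pose proof (d_pos j).
    pose proof (d_nonneg (S j)). lia.
  - pose proof (c_pos j). pose proof (d_nonneg j).
    pose proof (c_nonneg (S j)). lia.
Qed.

Lemma rb_nz v : rb v -> v <> (0,0).
Proof.
  intros (t & j & [-> | ->]); pose proof (bt_coords t j);
  destruct (bt t j) as [x y]; unfold vneg; simpl in *; intro E; inversion E; lia.
Qed.

Lemma not_root_zero : ~ root a b (0,0).
Proof.
  intro H. destruct (root_cases _ H) as [H'|[H' _]]; [apply (rb_nz _ H')|]; auto.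
Qed.


Definition Winv (P : vec -> vec -> Prop) :=
  forall i u v, P u v -> P (refl a b i u) (refl a b i v).

Lemma Winv_iff P (HP : Winv P) i u v : P (refl a b i u) (refl a b i v) <-> P u v.
Proof.
  split; intro H; [|apply HP; auto].
  rewrite <- (refl_invol a b i u), <- (refl_invol a b i v). apply HP; auto.
Qed.

Lemma same_red P (HP : Winv P) j m t :
  P (bt t j) (bt t (j + m)) <-> P (bt (xorb t (Nat.odd j)) 0) (bt (xorb t (Nat.odd j)) m).
Proof.
  revert t; induction j as [|j IH]; intros t.
  - simpl. rewrite xorb_false_r. tauto.
  - rewrite <- (Winv_iff P HP (negb t)). simpl (S j + m)%nat.
    rewrite !refl_down, IH.
    replace (xorb (negb t) (Nat.odd j)) with (xorb t (Nat.odd (S j))); [tauto|].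
    rewrite Nat.odd_succ, <- Nat.negb_odd. destruct t, (Nat.odd j); reflexivity.
Qed.

Lemma cross_red P (HP : Winv P) (Hs : forall u v, P u v -> P v u) k j :
  P (bt true j) (bt false k) <->
  (if Nat.odd k then P (bt true 0) (bt false (j + k)) else P (bt true (j + k)) (bt false 0)).
Proof.
  assert (Hsi : forall u v, P u v <-> P v u) by (split; apply Hs).
  assert (forall k, (forall j, P (bt true j) (bt false k) <->
     (if Nat.odd k then P (bt true 0) (bt false (j + k)) else P (bt true (j + k)) (bt false 0)))
   /\ (forall j, P (bt true j) (bt false (S k)) <->
     (if Nat.odd (S k) then P (bt true 0) (bt false (j + S k)) else P (bt true (j + S k)) (bt false 0)))).
  { induction k0 as [|k0 IH].
    - split; intro j0.
      + simpl. rewrite Nat.add_0_r. tauto.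
      + simpl (Nat.odd 1). rewrite <- (Winv_iff P HP true).
        rewrite refl_up. change true with (negb false) at 2. rewrite refl_down.
        simpl. rewrite Hsi. rewrite Nat.add_1_r. tauto.
    - split; [apply IH|]. intro j0.
      rewrite <- (Winv_iff P HP true), refl_up.
      change true with (negb false) at 2. rewrite refl_down. simpl negb.
      rewrite <- (Winv_iff P HP false), refl_up.
      change false with (negb true) at 2. rewrite refl_down. simpl negb.
      destruct IH as [IH _]. rewrite IH.
      replace (Nat.odd (S (S k0))) with (Nat.odd k0)
        by (rewrite !Nat.odd_succ, Nat.even_succ; reflexivity).
      replace (S (S j0) + k0)%nat with (j0 + S (S k0))%nat by lia. tauto. }
  apply H.
Qed.

Definition Pdiff (u v : vec) := root a b (vsub u v).
Definition Psum (u v : vec) := root a b (vsub u (vneg v)).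
Definition det (u v : vec) := fst u * snd v - snd u * fst v.
Definition Pdet (u v : vec) := det u v = 0.

Lemma Pdiff_inv : Winv Pdiff.
Proof. intros i u v H. unfold Pdiff. rewrite <- refl_sub. apply root_refl; auto. Qed.
Lemma Pdiff_sym u v : Pdiff u v -> Pdiff v u.
Proof.
  unfold Pdiff; intro H. replace (vsub v u) with (vneg (vsub u v)).
  apply root_neg; auto. destruct u, v; unfold vneg, vsub; simpl; f_equal; ring.
Qed.
Lemma Psum_inv : Winv Psum.
Proof. intros i u v H. unfold Psum. rewrite <- refl_neg, <- refl_sub. apply root_refl; auto. Qed.
Lemma Psum_sym u v : Psum u v -> Psum v u.
Proof.
  unfold Psum; intro H. replace (vsub v (vneg u)) with (vsub u (vneg v)); auto.
  destruct u, v; unfold vneg, vsub; simpl; f_equal; ring.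
Qed.
Lemma Pdet_inv : Winv Pdet.
Proof.
  intros i [x y] [x' y'] H; unfold Pdet, det in *; destruct i; simpl in *; nia.
Qed.
Lemma Pdet_sym u v : Pdet u v -> Pdet v u.
Proof. destruct u, v; unfold Pdet, det; simpl; lia. Qed.

Lemma bt1 j : bt true j = (c j, d (S j)). Proof. reflexivity. Qed.
Lemma bt2 j : bt false j = (c (S j), d j). Proof. reflexivity. Qed.

Lemma q_le_a t j : 0 < qf a b (bt t j) <= a.
Proof. destruct (q_bt t j) as [E|E]; rewrite E; lia. Qed.

Lemma qB2_1 : qf a b (bt false 1) = a.
Proof. rewrite bt2, c2, d1; unfold qf; simpl; ring. Qed.
Lemma qB2_2 : qf a b (bt false 2) = b.
Proof. rewrite bt2, c3, d2; unfold qf; simpl; ring. Qed.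
Lemma qB1_1 : qf a b (bt true 1) = b.
Proof. rewrite bt1, c1, d2; unfold qf; simpl; ring. Qed.

Lemma B1 m : root a b (vsub (bt true 0) (bt true (S m))).
Proof.
  pose proof (q_le_a true (S m)) as Hq. rewrite bt1 in Hq |- *. rewrite bt1.
  rewrite c0, d1. unfold vsub; cbn [fst snd].
  set (x := c (S m)) in *. set (y := d (S (S m))) in *.
  pose proof (drec m) as Ey. fold x y in Ey.
  pose proof (c_pos m) as Hx. fold x in Hx.
  assert (Eq : qf a b (0 - x, 1 - y) = qf a b (x, y) - a * (y - d m) + a)
    by (unfold qf; cbn [fst snd]; rewrite Ey; ring).
  destruct m as [|m].
  - destruct (Z.eq_dec b 1) as [e|e].
    + apply root_of_rb. exists false, 0%nat; right. rewrite bt2, c1, d0.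
      unfold x, y; rewrite c1, d2, e; unfold vneg; cbn [fst snd]; f_equal; ring.
    + apply q_imag; auto. intro E; inversion E; lia.
      assert (y = b) by (unfold y; apply d2). rewrite Eq, d0. subst y. nia.
  - apply q_imag; auto. intro E; inversion E; lia.
    rewrite Eq. pose proof (dD_ge2 m) as hd. fold y in hd.
    assert (a * 2 <= a * (y - d (S m))) by (apply Z.mul_le_mono_nonneg_l; lia).
    lia.
Qed.

Lemma B2 m : root a b (vsub (bt false 0) (bt false (S m))).
Proof.
  pose proof (q_le_a false (S m)) as Hq.
  rewrite !bt2. rewrite c1, d0. unfold vsub; cbn [fst snd].
  set (x := c (S (S m))) in *. set (y := d (S m)) in *.
  pose proof (crec m) as Ex. fold x y in Ex.
  pose proof (d_pos m) as Hy. fold y in Hy.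
  assert (Eq : qf a b (1 - x, 0 - y) = qf a b (x, y) - b * (x - c m) + b)
    by (unfold qf; cbn [fst snd]; rewrite Ex; ring).
  assert (Hnz : (1 - x, 0 - y) <> (0,0)) by (intro E; inversion E; lia).
  change (x, y) with (bt false (S m)) in Eq, Hq.
  destruct m as [|[|m]].
  - destruct (Z.eq_dec b 1) as [e|e].
    + apply root_of_rb. exists false, 2%nat; right. rewrite bt2, c3, d2.
      unfold x, y; rewrite c2, d1, e; unfold vneg; cbn [fst snd]; f_equal; ring.
    + apply q_imag; auto. rewrite Eq, qB2_1, c0. unfold x; rewrite c2. nia.
  - apply q_imag; auto. rewrite Eq, qB2_2, c1. unfold x; rewrite c3. nia.
  - apply q_imag; auto. rewrite Eq. pose proof (cD_big m). unfold x. nia.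
Qed.

Lemma B3a n : root a b (vsub (bt true n) (vneg (bt false 0))).
Proof.
  pose proof (q_le_a true n) as Hq.
  rewrite bt1, bt2, c1, d0.
  replace (vsub (c n, d (S n)) (vneg (1, 0))) with (c n + 1, d (S n))
    by (unfold vsub, vneg; cbn [fst snd]; f_equal; ring).
  rewrite bt1 in Hq.
  pose proof (crec n) as Ex. pose proof (c_nonneg n).
  assert (Eq : qf a b (c n + 1, d (S n)) =
     qf a b (c n, d (S n)) - b * (c (S (S n)) - c n) + b)
    by (unfold qf; cbn [fst snd]; rewrite Ex; ring).
  assert (Hnz : (c n + 1, d (S n)) <> (0,0)) by (intro E; inversion E; lia).
  destruct n as [|[|n]].
  - destruct (Z.eq_dec b 1) as [e|e].
    + apply root_of_rb. exists true, 1%nat; left. rewrite bt1, c1, d2, c0, d1, e. reflexivity.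
    + apply q_imag; auto. rewrite Eq, c2, c0, d1. unfold qf; cbn [fst snd]. nia.
  - apply q_imag; auto. rewrite Eq, c3, c1, d2. unfold qf; cbn [fst snd].
    assert (b * (a * b - 4) >= 0) by nia. nia.
  - apply q_imag; auto. rewrite Eq. pose proof (cD_big n). nia.
Qed.

Lemma B3b n : root a b (vsub (bt true 0) (vneg (bt false n))).
Proof.
  destruct n as [|n]. { apply B3a. }
  pose proof (q_le_a false (S n)) as Hq.
  rewrite bt1, bt2, c0, d1.
  replace (vsub (0, 1) (vneg (c (S (S n)), d (S n)))) with (c (S (S n)), d (S n) + 1)
    by (unfold vsub, vneg; cbn [fst snd]; f_equal; ring).
  rewrite bt2 in Hq.
  pose proof (drec (S n)) as Ey. pose proof (c_pos (S n)).
  assert (Eq : qf a b (c (S (S n)), d (S n) + 1) =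
     qf a b (c (S (S n)), d (S n)) - a * (d (S (S (S n))) - d (S n)) + a)
    by (unfold qf; cbn [fst snd]; rewrite Ey; ring).
  assert (Hnz : (c (S (S n)), d (S n) + 1) <> (0,0)) by (intro E; inversion E; lia).
  apply q_imag; auto. rewrite Eq. pose proof (dD_ge2 n).
  assert (a * 2 <= a * (d (S (S (S n))) - d (S n))) by (apply Z.mul_le_mono_nonneg_l; lia).
  lia.
Qed.

Lemma B4a (e : b = 1) : root a b (vsub (bt true 1) (bt false 0)).
Proof.
  apply root_of_rb. exists true, 0%nat; left. rewrite !bt1, bt2, c0, c1, d0, d1, d2, e.
  unfold vsub; cbn [fst snd]; f_equal; ring.
Qed.

Lemma B4b n : n <> 1%nat -> ~ root a b (vsub (bt true n) (bt false 0)).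
Proof.
  intro hn. pose proof (q_le_a true n) as Hq.
  rewrite bt1, bt2, c1, d0.
  replace (vsub (c n, d (S n)) (1, 0)) with (c n - 1, d (S n))
    by (unfold vsub; cbn [fst snd]; f_equal; ring).
  rewrite bt1 in Hq.
  pose proof (crec n) as Ex.
  assert (Eq : qf a b (c n - 1, d (S n)) =
     qf a b (c n, d (S n)) + b * (c (S (S n)) - c n) + b)
    by (unfold qf; cbn [fst snd]; rewrite Ex; ring).
  apply not_root_big. rewrite Eq.
  destruct n as [|[|n]].
  - assert (E : c 2 - c 0 = a) by (rewrite c2, c0; ring). rewrite E. nia.
  - lia.
  - pose proof (cD_big n). nia.
Qed.

Lemma B4c n : ~ root a b (vsub (bt true 0) (bt false n)).
Proof.
  pose proof (q_le_a false n) as Hq.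
  rewrite bt1, bt2, c0, d1.
  replace (vsub (0, 1) (c (S n), d n)) with (0 - c (S n), 1 - d n)
    by (unfold vsub; cbn [fst snd]; f_equal; ring).
  rewrite bt2 in Hq.
  pose proof (drec n) as Ey. pose proof (d_mono n).
  assert (Eq : qf a b (0 - c (S n), 1 - d n) =
     qf a b (c (S n), d n) + a * (d (S (S n)) - d n) + a)
    by (unfold qf; cbn [fst snd]; rewrite Ey; ring).
  apply not_root_big. rewrite Eq. nia.
Qed.

Lemma B5a m : ~ root a b (vsub (bt true 0) (vneg (bt true m))).
Proof.
  rewrite !bt1, c0, d1.
  replace (vsub (0, 1) (vneg (c m, d (S m)))) with (c m, d (S m) + 1)
    by (unfold vsub, vneg; cbn [fst snd]; f_equal; ring).
  apply not_root_big.
  destruct m as [|m].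
  - rewrite c0, d1. unfold qf; cbn [fst snd]. nia.
  - pose proof (q_le_a true (S m)) as Hq. rewrite bt1 in Hq.
    pose proof (drec m) as Ey. pose proof (d_mono m).
    assert (Eq : qf a b (c (S m), d (S (S m)) + 1) =
       qf a b (c (S m), d (S (S m))) + a * (d (S (S m)) - d m) + a)
      by (unfold qf; cbn [fst snd]; rewrite Ey; ring).
    rewrite Eq. nia.
Qed.

Lemma not_rb_20 : ~ rb (2, 0).
Proof.
  intros (t & j & [E|E]).
  - destruct t.
    + rewrite bt1 in E. inversion E. pose proof (d_pos j). lia.
    + rewrite bt2 in E. inversion E. destruct j.
      * rewrite c1 in *; lia.
      * pose proof (d_pos j). lia.
  - pose proof (bt_coords t j). destruct (bt t j) as [x y]. unfold vneg in E.
    simpl in *. inversion E. lia.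
Qed.

Lemma B5b m : (b = 1 -> m <> 2%nat) -> ~ root a b (vsub (bt false 0) (vneg (bt false m))).
Proof.
  intro hm. rewrite !bt2, c1, d0.
  replace (vsub (1, 0) (vneg (c (S m), d m))) with (c (S m) + 1, d m)
    by (unfold vsub, vneg; cbn [fst snd]; f_equal; ring).
  destruct m as [|m].
  - rewrite c1, d0. intro H. destruct (root_cases _ H) as [H'|[_ H']].
    + apply not_rb_20. exact H'.
    + unfold qf in H'; cbn [fst snd] in H'. nia.
  - apply not_root_big.
    pose proof (q_le_a false (S m)) as Hq. rewrite bt2 in Hq.
    pose proof (crec m) as Ex.
    assert (Eq : qf a b (c (S (S m)) + 1, d (S m)) =
       qf a b (c (S (S m)), d (S m)) + b * (c (S (S m)) - c m) + b)
      by (unfold qf; cbn [fst snd]; rewrite Ex; ring).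
    rewrite Eq. destruct m as [|[|m]].
    + assert (E : c 2 - c 0 = a) by (rewrite c2, c0; ring). rewrite E. nia.
    + change (c 3, d 2) with (bt false 2). rewrite qB2_2.
      assert (E : c 3 - c 1 = a * b - 2) by (rewrite c3, c1; ring). rewrite E.
      destruct (Z.eq_dec b 1) as [e|e]; [exfalso; apply (hm e); reflexivity|]. nia.
    + pose proof (cD_big m). nia.
Qed.

Lemma B5c (e : b = 1) : root a b (vsub (bt false 0) (vneg (bt false 2))).
Proof.
  apply root_of_rb. exists false, 1%nat; left.
  rewrite !bt2, c1, c2, c3, d0, d1, d2, e. unfold vsub, vneg; cbn [fst snd]; f_equal; ring.
Qed.

Lemma same_diff t j k : j <> k -> root a b (vsub (bt t j) (bt t k)).
Proof.
  intro hjk. change (Pdiff (bt t j) (bt t k)).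
  assert (G : forall j m, Pdiff (bt t j) (bt t (j + S m))).
  { intros j0 m. apply (same_red Pdiff Pdiff_inv). destruct (xorb t (Nat.odd j0)).
    - apply B1. - apply B2. }
  destruct (Nat.lt_ge_cases j k) as [h|h].
  - replace k with (j + S (k - j - 1))%nat by lia. apply G.
  - apply Pdiff_sym. replace j with (k + S (j - k - 1))%nat by lia. apply G.
Qed.

Lemma cross_sum j k : root a b (vsub (bt true j) (vneg (bt false k))).
Proof.
  change (Psum (bt true j) (bt false k)).
  rewrite (cross_red Psum Psum_inv Psum_sym). destruct (Nat.odd k).
  - apply B3b. - apply B3a.
Qed.

Lemma cross_sum' j k : root a b (vsub (vneg (bt true j)) (bt false k)).
Proof.
  replace (vsub (vneg (bt true j)) (bt false k)) with (vneg (vsub (bt true j) (vneg (bt false k)))).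
  - apply root_neg, cross_sum.
  - destruct (bt true j), (bt false k); unfold vsub, vneg; cbn [fst snd]; f_equal; ring.
Qed.

Lemma cross_diff (e : b = 1) j k :
  root a b (vsub (bt true j) (bt false k)) <-> (j = 1 /\ k = 0)%nat.
Proof.
  change (Pdiff (bt true j) (bt false k) <-> (j = 1 /\ k = 0)%nat).
  rewrite (cross_red Pdiff Pdiff_inv Pdiff_sym).
  destruct k as [|[|k]].
  - simpl. rewrite Nat.add_0_r. split.
    + intro H. destruct (Nat.eq_dec j 1); [lia|]. exfalso; apply (B4b j); auto.
    + intros [-> _]. apply B4a; auto.
  - simpl. split; [intro H; exfalso; apply (B4c _ H)|lia].
  - destruct (Nat.odd (S (S k))).
    + split; [intro H; exfalso; apply (B4c _ H)|lia].
    + split; [intro H; exfalso; apply (B4b (j + S (S k))); auto; lia|lia].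
Qed.

Lemma same_sum t j m :
  root a b (vsub (bt t j) (vneg (bt t (j + m)))) <->
  (xorb t (Nat.odd j) = false /\ b = 1 /\ m = 2%nat).
Proof.
  change (Psum (bt t j) (bt t (j + m)) <-> (xorb t (Nat.odd j) = false /\ b = 1 /\ m = 2%nat)).
  rewrite (same_red Psum Psum_inv). destruct (xorb t (Nat.odd j)).
  - split; [intro H; exfalso; apply (B5a _ H)|intros [H _]; discriminate].
    - split.
    + intro H. destruct (Z.eq_dec b 1) as [e|e]; [|exfalso; apply (B5b m); auto; intro; lia].
      destruct (Nat.eq_dec m 2) as [->|hm]; [auto|].
      exfalso; apply (B5b m); auto.
    + intros [_ [e ->]]. apply B5c; auto.
Qed.

Lemma det_cross j k : det (bt true j) (bt false k) <> 0.
Proof.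
  change (~ Pdet (bt true j) (bt false k)).
  rewrite (cross_red Pdet Pdet_inv Pdet_sym). unfold Pdet, det.
  destruct (Nat.odd k); rewrite bt1, bt2; cbn [fst snd].
  - rewrite c0, d1. pose proof (c_pos (j + k)). lia.
  - rewrite c1, d0. pose proof (d_pos (j + k)). lia.
Qed.

Lemma det_same t j k : j <> k -> det (bt t j) (bt t k) <> 0.
Proof.
  intro hjk. change (~ Pdet (bt t j) (bt t k)).
  assert (G : forall j m, ~ Pdet (bt t j) (bt t (j + S m))).
  { intros j0 m. rewrite (same_red Pdet Pdet_inv). unfold Pdet, det.
    destruct (xorb t (Nat.odd j0)).
    - rewrite !bt1; cbn [fst snd]. rewrite c0, d1. pose proof (c_pos m). lia.
    - rewrite !bt2; cbn [fst snd]. rewrite c1, d0. pose proof (d_pos m). lia. }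
  destruct (Nat.lt_ge_cases j k) as [h|h].
  - replace k with (j + S (k - j - 1))%nat by lia. apply G.
  - intro H; apply Pdet_sym in H. revert H.
    replace j with (k + S (j - k - 1))%nat by lia. apply G.
Qed.

Definition sv (s : bool) (v : vec) : vec := if s then v else vneg v.

Lemma vsub_comm_neg u v : vsub u (vneg v) = vsub v (vneg u).
Proof. destruct u, v; unfold vsub, vneg; cbn [fst snd]; f_equal; ring. Qed.
Lemma vsub_neg_neg u v : vsub (vneg u) (vneg v) = vneg (vsub u v).
Proof. destruct u, v; unfold vsub, vneg; cbn [fst snd]; f_equal; ring. Qed.
Lemma vsub_neg_l u v : vsub (vneg u) v = vneg (vsub u (vneg v)).
Proof. destruct u, v; unfold vsub, vneg; cbn [fst snd]; f_equal; ring. Qed.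
Lemma vsub_swap u v : vsub v u = vneg (vsub u v).
Proof. destruct u, v; unfold vsub, vneg; cbn [fst snd]; f_equal; ring. Qed.
Lemma vsub_self u : vsub u u = (0,0).
Proof. destruct u; unfold vsub; cbn [fst snd]; f_equal; ring. Qed.

Lemma bad s t j s' t' k : xorb s s' = xorb t t' -> sv s (bt t j) <> sv s' (bt t' k) ->
  root a b (vsub (sv s (bt t j)) (sv s' (bt t' k))).
Proof.
  intros hx hne. destruct s, s', t, t'; simpl in hx; try discriminate; unfold sv in *.
  all: first
    [ apply same_diff; intro E; subst; congruence
    | apply cross_sum
    | (rewrite vsub_comm_neg; apply cross_sum)
    | apply cross_sum'
    | (rewrite vsub_neg_l, vsub_comm_neg; apply root_neg, cross_sum)
    | (rewrite vsub_neg_neg; apply root_neg, same_diff; intro E; subst; congruence) ].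
Qed.

Lemma pair_ok S u v s t j s' t' k : pi_system a b S -> S u -> S v -> u <> v ->
  u = sv s (bt t j) -> v = sv s' (bt t' k) -> xorb s s' <> xorb t t'.
Proof.
  intros HS Hu Hv huv Eu Ev hx. apply (proj2 HS u v Hu Hv). subst. apply bad; auto.
Qed.

Lemma rb_sv v : rb v -> exists s t j, v = sv s (bt t j).
Proof. intros (t & j & [E|E]); [exists true|exists false]; exists t, j; auto. Qed.

Lemma vec_eq_dec (u v : vec) : {u = v} + {u <> v}.
Proof. decide equality; apply Z.eq_dec. Qed.

Lemma S_label S v : pi_system a b S -> S v -> exists s t j, v = sv s (bt t j).
Proof. intros HS Hv. apply rb_sv, real_iff_rb, (proj1 HS v Hv). Qed.

Lemma three S : pi_system a b S -> forall x y z, S x -> S y -> S z -> x = y \/ x = z \/ y = z.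
Proof.
  intros HS x y z Hx Hy Hz.
  destruct (vec_eq_dec x y) as [|hxy]; [auto|].
  destruct (vec_eq_dec x z) as [|hxz]; [auto|].
  destruct (vec_eq_dec y z) as [|hyz]; [auto|].
  exfalso.
  destruct (S_label S x HS Hx) as (s1 & t1 & j1 & E1).
  destruct (S_label S y HS Hy) as (s2 & t2 & j2 & E2).
  destruct (S_label S z HS Hz) as (s3 & t3 & j3 & E3).
  pose proof (pair_ok S x y _ _ _ _ _ _ HS Hx Hy hxy E1 E2).
  pose proof (pair_ok S x z _ _ _ _ _ _ HS Hx Hz hxz E1 E3).
  pose proof (pair_ok S y z _ _ _ _ _ _ HS Hy Hz hyz E2 E3).
  destruct s1, s2, s3, t1, t2, t3; simpl in *; congruence.
Qed.

Lemma det_sv s s' u v : det (sv s u) (sv s' v) = if xorb s s' then - det u v else det u v.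
Proof. destruct u, v, s, s'; unfold sv, det, vneg; cbn [xorb fst snd]; ring. Qed.

Lemma det_labels s t j s' t' k : (t = t' -> j <> k) ->
  det (sv s (bt t j)) (sv s' (bt t' k)) <> 0.
Proof.
  intros h. rewrite det_sv.
  assert (det (bt t j) (bt t' k) <> 0).
  { destruct t, t'.
    - apply det_same; auto.
    - apply det_cross.
    - unfold det in *. pose proof (det_cross k j). unfold det in H. lia.
    - apply det_same; auto. }
  destruct (xorb s s'); lia.
Qed.

Lemma pi_set_eq S T : pi_system a b S -> set_eq S T -> pi_system a b T.
Proof.
  intros [H1 H2] E. split.
  - intros v Hv; apply H1, E, Hv.
  - intros u v Hu Hv; apply H2; apply E; auto.
Qed.

Lemma set_eq_swap S u v : set_eq S (pair_set u v) -> set_eq S (pair_set v u).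
Proof. unfold set_eq, pair_set. intros H x. rewrite H. tauto. Qed.

Lemma pi_neg_pair u v : pi_system a b (pair_set (vneg u) (vneg v)) -> pi_system a b (pair_set u v).
Proof.
  intros [H1 H2]. split.
  - intros x [-> | ->]; [rewrite <- (vneg_invol u)|rewrite <- (vneg_invol v)];
      apply real_neg, H1; [left|right]; auto.
  - intros x y Hx Hy Hr. apply (H2 (vneg x) (vneg y)).
    + destruct Hx as [->| ->]; [left|right]; auto.
    + destruct Hy as [->| ->]; [left|right]; auto.
    + rewrite vsub_neg_neg. apply root_neg; auto.
Qed.

Lemma bt_pos_real t j : pos_real_root a b (bt t j).
Proof. split; [apply bt_real|]. pose proof (bt_coords t j); lia. Qed.

Lemma classify S : pi_system a b S -> (exists u v, S u /\ S v /\ u <> v) ->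
     ((exists j k : nat, set_eq S (pair_set (beta1 a b j) (beta2 a b k)) /\
          pi_system a b (pair_set (beta1 a b j) (beta2 a b k)))
      \/ (exists j k : nat,
          set_eq S (pair_set (vneg (beta1 a b j)) (vneg (beta2 a b k))) /\
          pi_system a b (pair_set (beta1 a b j) (beta2 a b k)))
      \/ (exists (i j k : nat), (i = 1%nat \/ i = 2%nat) /\
          set_eq S (pair_set (beta a b i j) (vneg (beta a b i k)))))
     /\ (forall x y z, S x -> S y -> S z -> x = y \/ x = z \/ y = z)
     /\ ((forall u v, S u -> S v -> u <> v ->
            fst u * snd v - snd u * fst v <> 0)
         \/ (exists al, pos_real_root a b al /\ set_eq S (pair_set al (vneg al)))).
Proof.
  intros HS (x & y & Hx & Hy & hxy).
  pose proof (three S HS) as H3.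
  assert (Hset : set_eq S (pair_set x y)).
  { intro z; split.
    - intro Hz. destruct (H3 x y z Hx Hy Hz) as [E|[E|E]]; [congruence|left|right]; auto.
    - intros [-> | ->]; auto. }
  destruct (S_label S x HS Hx) as (s & t & j & Ex).
  destruct (S_label S y HS Hy) as (s' & t' & k & Ey).
  pose proof (pair_ok S x y _ _ _ _ _ _ HS Hx Hy hxy Ex Ey) as Hok.
  split; [|split; [exact H3|]].
  - subst x y.
    destruct s, s', t, t'; simpl in Hok; try (exfalso; apply Hok; reflexivity); unfold sv in *.
    + left. exists j, k. split; auto. apply (pi_set_eq S); auto.
    + left. exists k, j. apply set_eq_swap in Hset. split; auto. apply (pi_set_eq S); auto.
    + right; right. exists 1%nat, j, k. split; auto.
    + right; right. exists 2%nat, j, k. split; auto.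
    + right; right. exists 1%nat, k, j. split; auto. apply set_eq_swap; auto.
    + right; right. exists 2%nat, k, j. split; auto. apply set_eq_swap; auto.
    + right; left. exists j, k. split; auto. apply pi_neg_pair. apply (pi_set_eq S); auto.
    + right; left. exists k, j. apply set_eq_swap in Hset. split; auto.
      apply pi_neg_pair. apply (pi_set_eq S); auto.
  - destruct (Bool.bool_dec t t') as [et|et]; [destruct (Nat.eq_dec j k) as [ej|ej]|].
    + subst t' k. right. exists (bt t j). split; [apply bt_pos_real|].
      subst x y. destruct s, s', t; simpl in Hok; try (exfalso; apply Hok; reflexivity).
      all: unfold sv in *; first [exact Hset | apply set_eq_swap; exact Hset].
    + left. assert (Hd : det x y <> 0) by (subst; apply det_labels; auto).
      intros u v Hu Hv huv. apply Hset in Hu, Hv.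
      destruct Hu as [->| ->], Hv as [->| ->]; try congruence.
      * exact Hd.
      * unfold det in Hd. lia.
    + left. assert (Hd : det x y <> 0) by (subst; apply det_labels; intro; contradiction).
      intros u v Hu Hv huv. apply Hset in Hu, Hv.
      destruct Hu as [->| ->], Hv as [->| ->]; try congruence.
      * exact Hd.
      * unfold det in Hd. lia.
Qed.

Lemma conj2 (e : b = 1) j k :
  pi_system a b (pair_set (beta1 a b j) (beta2 a b k)) <-> (j, k) <> (1%nat, 0%nat).
Proof.
  split.
  - intros HP E. inversion E; subst j k.
    apply (proj2 HP (beta1 a b 1) (beta2 a b 0)); [left|right|]; auto.
    apply (cross_diff e 1 0). auto.
  - intros hne. split.
    + intros v [-> | ->]; [exact (bt_real true j)|exact (bt_real false k)].
    + intros u v [-> | ->] [-> | ->].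
      * rewrite vsub_self; apply not_root_zero.
      * intro H. apply (cross_diff e j k) in H. destruct H; subst j k; apply hne; reflexivity.
      * rewrite vsub_swap, root_neg_iff. intro H.
        apply (cross_diff e j k) in H. destruct H; subst j k; apply hne; reflexivity.
      * rewrite vsub_self; apply not_root_zero.
Qed.

Lemma sum_root t j k : root a b (vsub (bt t j) (vneg (bt t k))) <->
  (b = 1 /\ exists s, xorb t (Nat.odd s) = false /\
      ((j = s /\ k = s + 2) \/ (j = s + 2 /\ k = s))%nat).
Proof.
  destruct (Nat.le_ge_cases j k) as [h|h].
  - destruct (Nat.le_exists_sub j k h) as [m [-> _]]. rewrite Nat.add_comm, same_sum.
    split.
    + intros (h1 & h2 & h3). split; [auto|]. exists j. split; [auto|left; lia].
    + intros (h2 & s & h1 & [[-> hh]|[-> hh]]); [|lia]. split; [|split]; auto. lia.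
  - destruct (Nat.le_exists_sub k j h) as [m [-> _]]. rewrite vsub_comm_neg.
    rewrite Nat.add_comm, same_sum.
    split.
    + intros (h1 & h2 & h3). split; [auto|]. exists k. split; [auto|right; lia].
    + intros (h2 & s & h1 & [[hh ->]|[hh ->]]); [lia|]. split; [|split]; auto. lia.
Qed.

Lemma pair_sum_pi t j k : pi_system a b (pair_set (bt t j) (vneg (bt t k))) <->
  ~ root a b (vsub (bt t j) (vneg (bt t k))).
Proof.
  split.
  - intros HP. apply (proj2 HP); [left|right]; auto.
  - intros hn. split.
    + intros v [-> | ->]; [|apply real_neg]; apply bt_real.
    + intros u v [-> | ->] [-> | ->].
      * rewrite vsub_self; apply not_root_zero.
      * exact hn.
      * rewrite vsub_neg_l, root_neg_iff, vsub_comm_neg. exact hn.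
      * rewrite vsub_self; apply not_root_zero.
Qed.

Lemma odd_mod s : Nat.odd s = Nat.eqb (s mod 2) 1.
Proof.
  assert (forall s, Nat.odd s = Nat.eqb (s mod 2) 1 /\ Nat.odd (S s) = Nat.eqb ((S s) mod 2) 1).
  { induction s0 as [|s0 IH]. - split; reflexivity.
    - split; [apply IH|].
      assert (E : (S (S s0) mod 2 = s0 mod 2)%nat).
      { replace (S (S s0)) with (s0 + 1 * 2)%nat by (rewrite Nat.add_comm; reflexivity).
        apply Nat.Div0.mod_add. }
      rewrite E, Nat.odd_succ, Nat.even_succ. apply IH. }
  apply H.
Qed.

Lemma parity_iff s i : (i = 1 \/ i = 2)%nat ->
  (xorb (Nat.eqb i 1) (Nat.odd s) = false <-> Nat.modulo s 2 = Nat.modulo i 2).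
Proof.
  intros hi. rewrite odd_mod.
  assert (Hr: (s mod 2 = 0 \/ s mod 2 = 1)%nat) by (pose proof (Nat.mod_upper_bound s 2); lia).
  destruct hi as [-> | ->]; destruct Hr as [Hr|Hr]; rewrite Hr; simpl; split; intro; congruence.
Qed.

Lemma beta_bt i j : beta a b i j = bt (Nat.eqb i 1) j.
Proof. reflexivity. Qed.

Lemma conj3 (h2 : 2 <= b) i j k : (i = 1 \/ i = 2)%nat ->
  pi_system a b (pair_set (beta a b i j) (vneg (beta a b i k))).
Proof.
  intros _. rewrite !beta_bt. apply pair_sum_pi. rewrite sum_root. lia.
Qed.

Lemma conj4 (e : b = 1) i j k : (i = 1 \/ i = 2)%nat ->
  (pi_system a b (pair_set (beta a b i j) (vneg (beta a b i k))) <->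
      ~ (exists s : nat, Nat.modulo s 2 = Nat.modulo i 2 /\
           ((j = s /\ k = (s + 2)%nat) \/ (j = (s + 2)%nat /\ k = s)))).
Proof.
  intros hi. rewrite !beta_bt, pair_sum_pi, sum_root.
  split; intros H1 H2; apply H1.
  - destruct H2 as (s & hs & hh). split; auto. exists s. split; auto. apply parity_iff; auto.
  - destruct H2 as (_ & s & hs & hh). exists s. split; auto. apply parity_iff; auto.
Qed.

Lemma main_sec :
  (forall S : vec -> Prop, pi_system a b S ->
     (exists u v, S u /\ S v /\ u <> v) ->
     ((exists j k : nat, set_eq S (pair_set (beta1 a b j) (beta2 a b k)) /\
          pi_system a b (pair_set (beta1 a b j) (beta2 a b k)))
      \/ (exists j k : nat,
          set_eq S (pair_set (vneg (beta1 a b j)) (vneg (beta2 a b k))) /\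
          pi_system a b (pair_set (beta1 a b j) (beta2 a b k)))
      \/ (exists (i j k : nat), (i = 1%nat \/ i = 2%nat) /\
          set_eq S (pair_set (beta a b i j) (vneg (beta a b i k)))))
     /\ (forall x y z, S x -> S y -> S z -> x = y \/ x = z \/ y = z)
     /\ ((forall u v, S u -> S v -> u <> v ->
            fst u * snd v - snd u * fst v <> 0)
         \/ (exists al, pos_real_root a b al /\ set_eq S (pair_set al (vneg al)))))
  /\
  (b = 1 -> forall j k : nat,
     pi_system a b (pair_set (beta1 a b j) (beta2 a b k)) <-> (j, k) <> (1%nat, 0%nat))
  /\
  (2 <= b -> forall i j k : nat, (i = 1%nat \/ i = 2%nat) ->
     pi_system a b (pair_set (beta a b i j) (vneg (beta a b i k))))
  /\
  (b = 1 -> forall i j k : nat, (i = 1%nat \/ i = 2%nat) ->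
     (pi_system a b (pair_set (beta a b i j) (vneg (beta a b i k))) <->
      ~ (exists s : nat, Nat.modulo s 2 = Nat.modulo i 2 /\
           ((j = s /\ k = (s + 2)%nat) \/ (j = (s + 2)%nat /\ k = s))))).
Proof.
  split; [exact classify|]. split; [exact conj2|]. split; [exact conj3|exact conj4].
Qed.





End Main.

Theorem theorem4p1 (a b : Z) (hba : b <= a) (hb : 1 <= b)
    (hab : 2 <= b \/ (b = 1 /\ 5 <= a)) :
  (* classification *)
  (forall S : vec -> Prop, pi_system a b S ->
     (exists u v, S u /\ S v /\ u <> v) ->
     ((exists j k : nat, set_eq S (pair_set (beta1 a b j) (beta2 a b k)) /\
          pi_system a b (pair_set (beta1 a b j) (beta2 a b k)))
      \/ (exists j k : nat,
          set_eq S (pair_set (vneg (beta1 a b j)) (vneg (beta2 a b k))) /\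
          pi_system a b (pair_set (beta1 a b j) (beta2 a b k)))
      \/ (exists (i j k : nat), (i = 1%nat \/ i = 2%nat) /\
          set_eq S (pair_set (beta a b i j) (vneg (beta a b i k)))))
     (* in particular |S| <= 2 *)
     /\ (forall x y z, S x -> S y -> S z -> x = y \/ x = z \/ y = z)
     (* and S is linearly independent unless S = {alpha, -alpha} *)
     /\ ((forall u v, S u -> S v -> u <> v ->
            fst u * snd v - snd u * fst v <> 0)
         \/ (exists al, pos_real_root a b al /\ set_eq S (pair_set al (vneg al)))))
  /\ (* for b = 1, a >= 5: {beta_1^j, beta_2^k} is a pi-system iff (j,k) <> (1,0) *)
  (b = 1 -> forall j k : nat,
     pi_system a b (pair_set (beta1 a b j) (beta2 a b k)) <-> (j, k) <> (1%nat, 0%nat))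
  /\ (* converse, b >= 2 *)
  (2 <= b -> forall i j k : nat, (i = 1%nat \/ i = 2%nat) ->
     pi_system a b (pair_set (beta a b i j) (vneg (beta a b i k))))
  /\ (* converse, b = 1, a >= 5 *)
  (b = 1 -> forall i j k : nat, (i = 1%nat \/ i = 2%nat) ->
     (pi_system a b (pair_set (beta a b i j) (vneg (beta a b i k))) <->
      ~ (exists s : nat, Nat.modulo s 2 = Nat.modulo i 2 /\
           ((j = s /\ k = (s + 2)%nat) \/ (j = (s + 2)%nat /\ k = s))))).
Proof.
  assert (H4 : 4 <= a * b) by (destruct hab as [h|[h1 h2]]; nia).
  assert (H5 : b = 1 -> 5 <= a) by (intro e; destruct hab as [h|[h1 h2]]; lia).
  eapply main_sec; eauto.
Qed.
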